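(* For every instance of Bin Packing there exists an optimal solution in which, for every bin $b$ containing only small items and every bin $b'$ containing small items and additionally large items, the total size of the small items in $b$ is at least the total size of the small items in $b'$.
   Context: Bin Packing: given a sequence of items with sizes in $\mathbb{Q}_{\ge 0}$ and a capacity $T$, a solution assigns the items to bins so that the total size in each bin is at most $T$; an optimal solution uses the minimum number of bins. A subsequence of items is 3-incompatible if no three distinct items of it have total size at most $T$; the large items form a largest 3-incompatible subsequence and the remaining items are small. *)

(* Defs.v *)
From HB Require Import structures.
From mathcomp Require Import all_boot all_order all_algebra.
Set Implicit Arguments. Unset Strict Implicit. Unset Printing Implicit Defensive.
Import Order.TTheory GRing.Theory Num.Theory.
Local Open Scope ring_scope.

(* Items are indexed by 'I_n, with sizes s : 'I_n -> rat; capacity T.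
   A solution with k bins is an assignment f : 'I_n -> 'I_k. *)

Definition load (n k : nat) (s : 'I_n -> rat) (f : 'I_n -> 'I_k) (b : 'I_k) : rat :=
  \sum_(i | f i == b) s i.

(* total size of the items of bin b that do not belong to L (the small items) *)
Definition small_load (n k : nat) (s : 'I_n -> rat) (L : {set 'I_n})
    (f : 'I_n -> 'I_k) (b : 'I_k) : rat :=
  \sum_(i | (f i == b) && (i \notin L)) s i.

Definition feasible (n k : nat) (s : 'I_n -> rat) (T : rat) (f : 'I_n -> 'I_k) : Prop :=
  forall b : 'I_k, load s f b <= T.

Definition optimal (n k : nat) (s : 'I_n -> rat) (T : rat) (f : 'I_n -> 'I_k) : Prop :=
  feasible s T f /\
  forall (k' : nat) (g : 'I_n -> 'I_k'), feasible s T g -> (k <= k')%N.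

Definition three_incompatible (n : nat) (s : 'I_n -> rat) (T : rat) (A : {set 'I_n}) : Prop :=
  forall i j l : 'I_n, i \in A -> j \in A -> l \in A ->
    i != j -> i != l -> j != l -> T < s i + s j + s l.

Definition largest_three_incompatible (n : nat) (s : 'I_n -> rat) (T : rat)
    (A : {set 'I_n}) : Prop :=
  three_incompatible s T A /\
  forall B : {set 'I_n}, three_incompatible s T B -> (#|B| <= #|A|)%N.

Definition only_small (n k : nat) (L : {set 'I_n}) (f : 'I_n -> 'I_k) (b : 'I_k) : Prop :=
  forall i, f i = b -> i \notin L.

Definition small_and_large (n k : nat) (L : {set 'I_n}) (f : 'I_n -> 'I_k) (b : 'I_k) : Prop :=
  (exists i, f i = b /\ i \notin L) /\ (exists j, f j = b /\ j \in L).

(* Main.v *)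
Require Import Defs.
From HB Require Import structures.
From mathcomp Require Import all_boot all_order all_algebra.
Import Order.TTheory GRing.Theory Num.Theory.
Set Implicit Arguments. Unset Strict Implicit.
Local Open Scope ring_scope.

Definition feasb (n k : nat) (s : 'I_n -> rat) (T : rat) (g : {ffun 'I_n -> 'I_k}) : bool :=
  [forall b, load s g b <= T].

Definition osb (n k : nat) (L : {set 'I_n}) (g : 'I_n -> 'I_k) (b : 'I_k) : bool :=
  [forall i, (g i == b) ==> (i \notin L)].

Definition pot (n k : nat) (s : 'I_n -> rat) (L : {set 'I_n}) (g : 'I_n -> 'I_k) : rat :=
  \sum_b (if osb L g b then load s g b else 0).

Lemma load_ffun n k (s : 'I_n -> rat) (g : 'I_n -> 'I_k) b :
  load s (finfun g) b = load s g b.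
Proof. by rewrite /load; apply: eq_bigl => i; rewrite ffunE. Qed.

Lemma load_ge0 n k (s : 'I_n -> rat) (g : 'I_n -> 'I_k) b :
  (forall i, 0 <= s i) -> 0 <= load s g b.
Proof. by move=> h; apply: sumr_ge0 => i _. Qed.
Lemma swap_step n k (s : 'I_n -> rat) (T : rat) (L : {set 'I_n})
  (hs0 : forall i, 0 <= s i) (g : 'I_n -> 'I_k) (b b' : 'I_k) :
  feasible s T g -> osb L g b -> (exists j, g j = b' /\ j \in L) ->
  load s g b < small_load s L g b' ->
  exists g' : 'I_n -> 'I_k, feasible s T g' /\ pot s L g < pot s L g'.
Proof.
move=> hf hb [j [hj jL]] hlt.
have bb' : b != b'.
  apply/eqP => e; move/forallP: hb => /(_ j); rewrite hj e eqxx /=.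
  by rewrite jL.
pose g' i := if (g i == b') && (i \notin L) then b else if g i == b then b' else g i.
have e1 : (b == b') = false := negbTE bb'.
have e2 : (b' == b) = false by rewrite eq_sym e1.
have Eb i : (g' i == b) = (g i == b') && (i \notin L).
  rewrite /g'; have [e|ne] := eqVneq (g i) b'.
    by rewrite ?e; case: (i \in L) => /=; rewrite ?eqxx ?e1 ?e2.
  have [e|nb] := eqVneq (g i) b; first by rewrite /= ?e ?eqxx ?e1 ?e2.
  by rewrite /= ?(negbTE nb) ?(negbTE ne).
have Eb' i : (g' i == b') = (g i == b) || ((g i == b') && (i \in L)).
  rewrite /g'; have [e|ne] := eqVneq (g i) b'.
    by rewrite ?e; case: (i \in L) => /=; rewrite ?eqxx ?e1 ?e2 /=; try exact: eqxx.
  have [e|nb] := eqVneq (g i) b; first by rewrite /= ?e ?eqxx ?e1 ?e2.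
  by rewrite /= ?(negbTE nb) ?(negbTE ne).
have Ec c i : c != b -> c != b' -> (g' i == c) = (g i == c).
  move=> cb cb'; rewrite /g'; case: ifP => [/andP[/eqP -> _]|_].
    by rewrite eq_sym (negbTE cb) eq_sym (negbTE cb').
  case: ifP => [/eqP ->|//]; by rewrite eq_sym (negbTE cb') eq_sym (negbTE cb).
have Lb : load s g' b = small_load s L g b'.
  by rewrite /load /small_load; apply: eq_bigl => i; rewrite Eb.
have Lg b0 : load s g b0 = small_load s L g b0 + \sum_(i | (g i == b0) && (i \in L)) s i.
  rewrite /load /small_load (bigID (fun i => i \in L)) /= addrC; congr (_ + _).
have Lb' : load s g' b' = load s g b + \sum_(i | (g i == b') && (i \in L)) s i.
  rewrite /load (bigID (fun i => g i == b)) /=; congr (_ + _).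
    by apply: eq_bigl => i; rewrite Eb'; case: (g i == b); rewrite /= ?andbT ?andbF.
  apply: eq_bigl => i; rewrite Eb'; have [e|nb] := eqVneq (g i) b.
    by rewrite /= ?e ?e1.
  by rewrite /= andbT.
have Lc c : c != b -> c != b' -> load s g' c = load s g c.
  by move=> cb cb'; rewrite /load; apply: eq_bigl => i; rewrite Ec.
have Oc c : c != b -> c != b' -> osb L g' c = osb L g c.
  by move=> cb cb'; rewrite /osb; apply: eq_forallb => i; rewrite Ec.
have sl_le : small_load s L g b' <= load s g b'.
  by rewrite (Lg b') lerDl; apply: sumr_ge0.
exists g'; split.
  move=> c; case: (eqVneq c b) => [->|cb].
    by rewrite Lb; apply: le_trans sl_le (hf b').
  case: (eqVneq c b') => [->|cb']; last by rewrite Lc // hf.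
  apply: le_trans (hf b'); rewrite Lb' (Lg b') lerD2r; exact: ltW.
rewrite /pot (bigD1 b) //= [X in _ < X](bigD1 b) //=.
have -> : osb L g' b.
  by apply/forallP => i; apply/implyP; rewrite Eb => /andP[].
rewrite hb Lb; apply: ltr_leD => //; apply: ler_sum => c cb.
case: (eqVneq c b') => [->|cb'].
  rewrite /osb; case: ifP => [/forallP /(_ j)|_]; first by rewrite hj eqxx jL.
  by case: ifP => _ //; apply: load_ge0.
by rewrite Oc // Lc.
Qed.

Lemma pot_ffun n k (s : 'I_n -> rat) L (g : 'I_n -> 'I_k) :
  pot s L (finfun g) = pot s L g.
Proof.
rewrite /pot; apply: eq_bigr => b _; rewrite load_ffun.
have -> : osb L (finfun g) b = osb L g b.
  by apply: eq_forallb => i; rewrite ffunE.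
by [].
Qed.

Theorem claim10 (n : nat) (s : 'I_n -> rat) (T : rat)
    (hs0 : forall i, 0 <= s i) (hsT : forall i, s i <= T)
    (L : {set 'I_n}) (hL : largest_three_incompatible s T L) :
  exists (k : nat) (f : 'I_n -> 'I_k),
    optimal s T f /\
    forall b b' : 'I_k, only_small L f b -> small_and_large L f b' ->
      small_load s L f b' <= load s f b.
Proof.
pose P k := [exists g : {ffun 'I_n -> 'I_k}, feasb s T g].
have exP : exists k, P k.
  exists n; apply/existsP; exists [ffun i => i]; apply/forallP => b.
  by rewrite load_ffun /load big_pred1_eq.
case: (ex_minnP exP) => k Pk kmin.
move/existsP: Pk => [g0 hg0].
case: (@arg_maxP _ _ _ g0 (fun g => feasb s T g) (fun g => pot s L g) hg0) => g hg gmax.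
exists k, (fun i => g i); split.
  split; first by move=> b; move/forallP: hg => /(_ b).
  move=> k' g' hg'; apply: kmin; apply/existsP; exists (finfun g').
  by apply/forallP => b; rewrite load_ffun.
move=> b b' hb [_ hsl]; rewrite leNgt; apply/negP => hlt.
have hosb : osb L g b by apply/forallP => i; apply/implyP => /eqP; exact: hb.
have hf : feasible s T g by move=> c; move/forallP: hg => /(_ c).
case: (swap_step hs0 hf hosb hsl hlt) => g' [hf' hpot].
have := gmax (finfun g'); rewrite pot_ffun.
have -> : feasb s T (finfun g') by apply/forallP => c; rewrite load_ffun.
by move=> /(_ isT) /= H; move: (lt_le_trans hpot H); rewrite ltxx.
Qed.
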